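(* Let $\psi$ be a formula, let $I$ be a total interpretation (defined on all pairs $(p,(d_1,\dots,d_n))$ with $d_i\in\mathcal D$) which interprets equality as identity, and let $I^\dagger$ be any classical interpretation agreeing with $I$ on all pairs whose arguments lie in $\mathcal D$ and interpreting equality as identity on $\mathcal D\cup\{\mathsf{NOFLOW}\}$. Let $\sigma$ be a partial firing for $\psi$ and $I$, i.e. $\sigma,I\models_P\psi$ and $MFA(\sigma)$. Fix $d_0\in\mathcal D$ and define the total classical assignment $\sigma^\dagger$ by: $\sigma^\dagger(x)=\sigma(x)$ if $\sigma(x)$ is defined and $\sigma^\dagger(x)=\mathrm{false}$ otherwise; $\sigma^\dagger(\hat x)=\sigma(\hat x)$ if $\sigma(\hat x)$ is defined; $\sigma^\dagger(\hat x)=\mathsf{NOFLOW}$ if $\sigma(\hat x)$ is undefined and $\sigma(x)\neq\mathrm{true}$; $\sigma^\dagger(\hat x)=d_0$ if $\sigma(\hat x)$ is undefined and $\sigma(x)=\mathrm{true}$. Then $\sigma^\dagger$ is a classical firing for $\psi$ and $I^\dagger$, i.e. $\sigma^\dagger,I^\dagger\models_C\psi\wedge\bigwedge_{x\in V(\psi)}FA(x)$.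
   Context: Fix a set $\mathcal X$ of synchronisation variables and, for each $x\in\mathcal X$, a distinct data flow variable $\hat x$; $\hat{\mathcal X}=\{\hat x : x\in\mathcal X\}$. Fix function symbols $\mathcal F$ and predicate symbols $\mathcal P$ (with arities), $\mathcal P$ containing binary equality $=$. $\mathcal D$ is the set of ground terms over $\mathcal F$; $\mathsf{NOFLOW}$ is a constant not in $\mathcal D$. Formulas and terms: $\psi ::= \top \mid x \mid \psi_1\wedge\psi_2 \mid \neg\psi \mid p(t_1,\dots,t_n)$, $t ::= \hat x \mid f(t_1,\dots,t_n)$ (classical formulas may additionally use the constant term $\mathsf{NOFLOW}$). $\mathrm{fv}(\psi)$ is the set of variables of $\mathcal X\cup\hat{\mathcal X}$ occurring in $\psi$, and $V(\psi)=\{x\in\mathcal X : x\in\mathrm{fv}(\psi)\text{ or }\hat x\in\mathrm{fv}(\psi)\}$. Disjunction, implication and biimplication are the usual abbreviations via $\neg,\wedge$. Partial logic: an assignment $\sigma$ is a partial map sending $x\in\mathcal X$ to $\{\mathrm{true},\mathrm{false}\}$ and $\hat x$ to $\mathcal D$; an interpretation $I$ is a partial map from pairs $(p,(d_1,\dots,d_n))$ ($d_i\in\mathcal D$) to $\{\mathrm{true},\mathrm{false}\}$; $\mathrm{Val}_\sigma(\hat x)=\sigma(\hat x)$, $\mathrm{Val}_\sigma(f(\vec t))=f(\mathrm{Val}_\sigma(t_1),\dots)$, undefined if some argument is. Partial satisfaction $\models_P$ / dissatisfaction $\mathrel{=\!\!|}_P$: $\models_P\top$ always; $\models_P x$ iff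 $\sigma(x)=\mathrm{true}$; $\models_P\psi_1\wedge\psi_2$ iff both; $\models_P\neg\psi$ iff $\mathrel{=\!\!|}_P\psi$; $\models_P p(\vec t)$ iff all $\mathrm{Val}_\sigma(t_i)$ are defined and $I(p,(\mathrm{Val}_\sigma(t_i))_i)=\mathrm{true}$; $\mathrel{=\!\!|}_P\top$ never; $\mathrel{=\!\!|}_P x$ iff $\sigma(x)=\mathrm{false}$; $\mathrel{=\!\!|}_P\psi_1\wedge\psi_2$ iff one conjunct is dissatisfied; $\mathrel{=\!\!|}_P\neg\psi$ iff $\models_P\psi$; $\mathrel{=\!\!|}_P p(\vec t)$ iff all values defined and $I(\dots)=\mathrm{false}$. $MFA(\sigma)$ (meta-flow axiom): for all $x\in\mathcal X$, if $\sigma(\hat x)$ is defined then $\sigma(x)=\mathrm{true}$. A partial firing for $\psi$ and $I$ is $\sigma$ with $\sigma,I\models_P\psi$ and $MFA(\sigma)$. Classical logic: a classical assignment is a total map sending each $x\in\mathcal X$ to $\{\mathrm{true},\mathrm{false}\}$ and each $\hat x$ to $\mathcal D\cup\{\mathsf{NOFLOW}\}$; a classical interpretation is a total map from pairs $(p,(d_1,\dots,d_n))$ with $d_i\in\mathcal D\cup\{\mathsf{NOFLOW}\}$ to $\{\mathrm{true},\mathrm{false}\}$; $\mathrm{Val}_\sigma(f(t_1,\dots,t_n))=\mathsf{NOFLOW}$ if some $\mathrm{Val}_\sigma(t_i)=\mathsf{NOFLOW}$, otherwise $f(\mathrm{Val}_\sigma(t_1),\dots)$. Classical satisfaction $\models_C$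 is standard: $\top$ always; $x$ iff $\sigma(x)=\mathrm{true}$; $\wedge$ iff both; $\neg\psi$ iff not $\sigma,I\models_C\psi$; $p(\vec t)$ iff $I(p,(\mathrm{Val}_\sigma(t_i))_i)=\mathrm{true}$. The flow axiom for $x$ is $FA(x):=\neg x\leftrightarrow(\hat x=\mathsf{NOFLOW})$. A classical firing for $\psi$ and $I$ is a classical assignment $\sigma$ with $\sigma,I\models_C\psi\wedge\bigwedge_{x\in V(\psi)}FA(x)$. *)

(* Defs.v *)
From Stdlib Require Import List Bool.
Import ListNotations.

(* Ground terms D over function symbols Fs (arities checked separately). *)
Inductive gterm (Fs : Type) : Type :=
| GApp : Fs -> list (gterm Fs) -> gterm Fs.
Arguments GApp {Fs} f args.

(* Terms: TVar x stands for the data flow variable x-hat; TNoflow is the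
   constant NOFLOW (only allowed in classical formulas). *)
Inductive term (Xs Fs : Type) : Type :=
| TVar : Xs -> term Xs Fs
| TApp : Fs -> list (term Xs Fs) -> term Xs Fs
| TNoflow : term Xs Fs.
Arguments TVar {Xs Fs} x.
Arguments TApp {Xs Fs} f ts.
Arguments TNoflow {Xs Fs}.

(* Formulas: FSync x is the synchronisation variable x. *)
Inductive form (Xs Fs Ps : Type) : Type :=
| FTop : form Xs Fs Ps
| FSync : Xs -> form Xs Fs Ps
| FAnd : form Xs Fs Ps -> form Xs Fs Ps -> form Xs Fs Ps
| FNot : form Xs Fs Ps -> form Xs Fs Ps
| FPred : Ps -> list (term Xs Fs) -> form Xs Fs Ps.
Arguments FTop {Xs Fs Ps}.
Arguments FSync {Xs Fs Ps} x.
Arguments FAnd {Xs Fs Ps} a b.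
Arguments FNot {Xs Fs Ps} a.
Arguments FPred {Xs Fs Ps} p ts.

Definition FImp {Xs Fs Ps} (a b : form Xs Fs Ps) := FNot (FAnd a (FNot b)).
Definition FIff {Xs Fs Ps} (a b : form Xs Fs Ps) := FAnd (FImp a b) (FImp b a).

Fixpoint wf_g {Fs} (arF : Fs -> nat) (d : gterm Fs) : Prop :=
  match d with
  | GApp f ds =>
      length ds = arF f /\
      (fix wfl (l : list (gterm Fs)) : Prop :=
         match l with [] => True | d' :: l' => wf_g arF d' /\ wfl l' end) ds
  end.

Fixpoint wf_term {Xs Fs} (arF : Fs -> nat) (t : term Xs Fs) : Prop :=
  match t with
  | TVar _ => True
  | TApp f ts =>
      length ts = arF f /\
      (fix wfl (l : list (term Xs Fs)) : Prop :=
         match l with [] => True | t' :: l' => wf_term arF t' /\ wfl l' end) ts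
  | TNoflow => False
  end.

Fixpoint wf_form {Xs Fs Ps} (arF : Fs -> nat) (arP : Ps -> nat)
  (phi : form Xs Fs Ps) : Prop :=
  match phi with
  | FTop => True
  | FSync _ => True
  | FAnd a b => wf_form arF arP a /\ wf_form arF arP b
  | FNot a => wf_form arF arP a
  | FPred p ts => length ts = arP p /\ Forall (wf_term arF) ts
  end.

(* Variables: V(psi) as a list (x occurs if x or x-hat occurs). *)
Fixpoint vars_term {Xs Fs} (t : term Xs Fs) : list Xs :=
  match t with
  | TVar x => [x]
  | TApp _ ts =>
      (fix vl (l : list (term Xs Fs)) : list Xs :=
         match l with [] => [] | t' :: l' => vars_term t' ++ vl l' end) ts
  | TNoflow => []
  end.

Fixpoint V {Xs Fs Ps} (phi : form Xs Fs Ps) : list Xs :=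
  match phi with
  | FTop => []
  | FSync x => [x]
  | FAnd a b => V a ++ V b
  | FNot a => V a
  | FPred _ ts => flat_map vars_term ts
  end.

(* A partial assignment is a pair (sx, sd): sx x = sigma(x), sd x = sigma(x-hat). *)
Fixpoint valP {Xs Fs} (sd : Xs -> option (gterm Fs)) (t : term Xs Fs)
  : option (gterm Fs) :=
  match t with
  | TVar x => sd x
  | TApp f ts =>
      match (fix vl (l : list (term Xs Fs)) : option (list (gterm Fs)) :=
               match l with
               | [] => Some []
               | t' :: l' =>
                   match valP sd t', vl l' with
                   | Some d, Some ds => Some (d :: ds)
                   | _, _ => None
                   end
               end) ts with
      | Some ds => Some (GApp f ds)
      | None => None
      end
  | TNoflow => None
  end.

Fixpoint valsP {Xs Fs} (sd : Xs -> option (gterm Fs)) (l : list (term Xs Fs))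
  : option (list (gterm Fs)) :=
  match l with
  | [] => Some []
  | t :: l' =>
      match valP sd t, valsP sd l' with
      | Some d, Some ds => Some (d :: ds)
      | _, _ => None
      end
  end.

(* Partial interpretation: I p ds = None means undefined. *)
Fixpoint satP {Xs Fs Ps} (sx : Xs -> option bool) (sd : Xs -> option (gterm Fs))
  (I : Ps -> list (gterm Fs) -> option bool) (phi : form Xs Fs Ps) : Prop :=
  match phi with
  | FTop => True
  | FSync x => sx x = Some true
  | FAnd a b => satP sx sd I a /\ satP sx sd I b
  | FNot a => dsatP sx sd I a
  | FPred p ts => exists ds, valsP sd ts = Some ds /\ I p ds = Some true
  end
with dsatP {Xs Fs Ps} (sx : Xs -> option bool) (sd : Xs -> option (gterm Fs))
  (I : Ps -> list (gterm Fs) -> option bool) (phi : form Xs Fs Ps) : Prop :=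
  match phi with
  | FTop => False
  | FSync x => sx x = Some false
  | FAnd a b => dsatP sx sd I a \/ dsatP sx sd I b
  | FNot a => satP sx sd I a
  | FPred p ts => exists ds, valsP sd ts = Some ds /\ I p ds = Some false
  end.

Definition MFA {Xs Fs} (sx : Xs -> option bool) (sd : Xs -> option (gterm Fs))
  : Prop :=
  forall x, sd x <> None -> sx x = Some true.

Definition partial_firing {Xs Fs Ps} (sx : Xs -> option bool)
  (sd : Xs -> option (gterm Fs)) (I : Ps -> list (gterm Fs) -> option bool)
  (psi : form Xs Fs Ps) : Prop :=
  satP sx sd I psi /\ MFA sx sd.

Inductive cval (Fs : Type) : Type :=
| CD : gterm Fs -> cval Fs
| CNoflow : cval Fs.
Arguments CD {Fs} d.
Arguments CNoflow {Fs}.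

Definition wf_cv {Fs} (arF : Fs -> nat) (v : cval Fs) : Prop :=
  match v with CD d => wf_g arF d | CNoflow => True end.

Fixpoint lift_args {Fs} (l : list (cval Fs)) : option (list (gterm Fs)) :=
  match l with
  | [] => Some []
  | CD d :: l' =>
      match lift_args l' with Some ds => Some (d :: ds) | None => None end
  | CNoflow :: _ => None
  end.

Fixpoint valC {Xs Fs} (cd : Xs -> cval Fs) (t : term Xs Fs) : cval Fs :=
  match t with
  | TVar x => cd x
  | TApp f ts =>
      match lift_args
              ((fix vl (l : list (term Xs Fs)) : list (cval Fs) :=
                  match l with [] => [] | t' :: l' => valC cd t' :: vl l' end) ts)
      with
      | Some ds => CD (GApp f ds)
      | None => CNoflow
      end
  | TNoflow => CNoflow
  end.

Fixpoint satC {Xs Fs Ps} (cx : Xs -> bool) (cd : Xs -> cval Fs)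
  (Ic : Ps -> list (cval Fs) -> bool) (phi : form Xs Fs Ps) : Prop :=
  match phi with
  | FTop => True
  | FSync x => cx x = true
  | FAnd a b => satC cx cd Ic a /\ satC cx cd Ic b
  | FNot a => ~ satC cx cd Ic a
  | FPred p ts => Ic p (map (valC cd) ts) = true
  end.

(* Flow axiom FA(x) := ~x <-> (x-hat = NOFLOW), with eqP the equality symbol. *)
Definition FA {Xs Fs Ps} (eqP : Ps) (x : Xs) : form Xs Fs Ps :=
  FIff (FNot (FSync x)) (FPred eqP [TVar x; TNoflow]).

Definition bigAnd {Xs Fs Ps} (l : list (form Xs Fs Ps)) : form Xs Fs Ps :=
  fold_right FAnd FTop l.

Definition classical_firing {Xs Fs Ps} (eqP : Ps) (cx : Xs -> bool)
  (cd : Xs -> cval Fs) (Ic : Ps -> list (cval Fs) -> bool)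
  (psi : form Xs Fs Ps) : Prop :=
  satC cx cd Ic (FAnd psi (bigAnd (map (FA eqP) (V psi)))).

Definition dagger_x {Xs} (sx : Xs -> option bool) (x : Xs) : bool :=
  match sx x with Some b => b | None => false end.

Definition dagger_d {Xs Fs} (d0 : gterm Fs) (sx : Xs -> option bool)
  (sd : Xs -> option (gterm Fs)) (x : Xs) : cval Fs :=
  match sd x with
  | Some d => CD d
  | None => match sx x with Some true => CD d0 | _ => CNoflow end
  end.

(* Main.v *)
Require Import Defs.
From Stdlib Require Import List.
Import ListNotations.

Lemma valP_app {Xs Fs} (sd : Xs -> option (gterm Fs)) f ts :
  valP sd (TApp f ts) = match valsP sd ts with Some ds => Some (GApp f ds) | None => None end.
Proof. simpl. match goal with |- match ?F ts with _ => _ end = _ =>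
  assert (E : forall l, F l = valsP sd l) end.
  { induction l as [|t l IH]; simpl; [reflexivity|]. rewrite IH. reflexivity. }
  rewrite E. reflexivity. Qed.

Lemma valC_app {Xs Fs} (cd : Xs -> cval Fs) f ts :
  valC cd (TApp f ts) = match lift_args (map (valC cd) ts) with Some ds => CD (GApp f ds) | None => CNoflow end.
Proof. simpl. match goal with |- match lift_args (?F ts) with _ => _ end = _ =>
  assert (E : forall l, F l = map (valC cd) l) end.
  { induction l as [|t l IH]; simpl; [reflexivity|]. rewrite IH. reflexivity. }
  rewrite E. reflexivity. Qed.

Lemma wf_term_app {Xs Fs} arF f (ts : list (term Xs Fs)) : wf_term arF (TApp f ts) -> length ts = arF f /\ Forall (wf_term arF) ts.
Proof. simpl. intros [H1 H2]; split; auto; clear H1; induction ts; simpl in *; auto.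
  destruct H2; constructor; auto. Qed.
Lemma wf_g_app {Fs} arF f (ds : list (gterm Fs)) : length ds = arF f -> Forall (wf_g arF) ds -> wf_g arF (GApp f ds).
Proof. simpl. intros H1 H2; split; auto; clear H1; induction H2; simpl; auto. Qed.



Fixpoint term_ind' {Xs Fs} (P : term Xs Fs -> Prop) (Hv : forall x, P (TVar x))
  (Ha : forall f ts, Forall P ts -> P (TApp f ts)) (Hn : P TNoflow) (t : term Xs Fs) : P t :=
  match t with
  | TVar x => Hv x
  | TApp f ts => Ha f ts ((fix go (l : list (term Xs Fs)) : Forall P l :=
       match l with [] => Forall_nil _ | t :: l => Forall_cons _ (term_ind' P Hv Ha Hn t) (go l) end) ts)
  | TNoflow => Hn
  end.

Section S.
Variables (Xs Fs Ps : Type) (arF : Fs -> nat) (sd : Xs -> option (gterm Fs)) (cd : Xs -> cval Fs)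
  (Hsd : forall x d, sd x = Some d -> wf_g arF d /\ cd x = CD d).

Lemma term_ok : forall t : term Xs Fs, wf_term arF t -> forall d, valP sd t = Some d -> valC cd t = CD d /\ wf_g arF d.
Proof.
  induction t as [x|f ts IH|] using term_ind'.
  - intros _ d H. simpl in *. destruct (Hsd x d H). auto.
  - intros Hw d H. apply wf_term_app in Hw as [Hl Hw]. rewrite valP_app in H. rewrite valC_app.
    assert (G : forall ds, valsP sd ts = Some ds -> lift_args (map (valC cd) ts) = Some ds /\ Forall (wf_g arF) ds /\ length ds = length ts).
    { clear H Hl. induction ts as [|t ts IHts]; intros ds Hd; simpl in *.
      - inversion Hd; subst; auto.
      - inversion IH; subst. inversion Hw; subst.
        destruct (valP sd t) as [d1|] eqn:E1; [|discriminate].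
        destruct (valsP sd ts) as [ds1|] eqn:E2; [|discriminate].
        inversion Hd; subst.
        destruct (H1 H3 d1 eq_refl) as [-> Hw1].
        destruct (IHts H2 H4 ds1 eq_refl) as [-> [? ?]]. simpl. auto. }
    destruct (valsP sd ts) as [ds|]; [|discriminate]. inversion H; subst.
    destruct (G ds eq_refl) as [-> [? ?]]. split; auto. apply wf_g_app; congruence.
  - intros [].
Qed.

Lemma terms_ok : forall ts : list (term Xs Fs), Forall (wf_term arF) ts -> forall ds, valsP sd ts = Some ds ->
   map (valC cd) ts = map CD ds /\ Forall (wf_g arF) ds /\ length ds = length ts.
Proof.
  induction ts as [|t ts IHts]; intros Hw ds Hd; simpl in *.
  - inversion Hd; subst; auto.
  - inversion Hw; subst.
    destruct (valP sd t) as [d1|] eqn:E1; [|discriminate].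
    destruct (valsP sd ts) as [ds1|] eqn:E2; [|discriminate].
    inversion Hd; subst.
    destruct (term_ok t H1 d1 E1) as [-> Hw1].
    destruct (IHts H2 ds1 eq_refl) as [-> [? ?]]. simpl. auto.
Qed.
End S.

Theorem mainTheorem4
  (Xs Fs Ps : Type) (arF : Fs -> nat) (arP : Ps -> nat) (eqP : Ps)
  (HeqAr : arP eqP = 2)
  (psi : form Xs Fs Ps) (Hpsi : wf_form arF arP psi)
  (I : Ps -> list (gterm Fs) -> option bool)
  (Itotal : forall p ds, length ds = arP p -> Forall (wf_g arF) ds -> I p ds <> None)
  (Ieq : forall d1 d2, wf_g arF d1 -> wf_g arF d2 ->
         (I eqP [d1; d2] = Some true <-> d1 = d2))
  (Ic : Ps -> list (cval Fs) -> bool)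
  (Iagree : forall p ds, length ds = arP p -> Forall (wf_g arF) ds ->
            I p ds = Some (Ic p (map CD ds)))
  (Iceq : forall v1 v2, wf_cv arF v1 -> wf_cv arF v2 ->
          (Ic eqP [v1; v2] = true <-> v1 = v2))
  (sx : Xs -> option bool) (sd : Xs -> option (gterm Fs))
  (Hsd : forall x d, sd x = Some d -> wf_g arF d)
  (Hfire : partial_firing sx sd I psi)
  (d0 : gterm Fs) (Hd0 : wf_g arF d0) :
  classical_firing eqP (dagger_x sx) (dagger_d d0 sx sd) Ic psi.
Proof.
  destruct Hfire as [Hsat Hmfa].
  set (cd := dagger_d d0 sx sd).
  assert (Hsd' : forall x d, sd x = Some d -> wf_g arF d /\ cd x = CD d).
  { intros x d H. split; [eauto|]. unfold cd, dagger_d. rewrite H. reflexivity. }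
  assert (Hform : forall phi : form Xs Fs Ps, wf_form arF arP phi ->
     (satP sx sd I phi -> satC (dagger_x sx) cd Ic phi) /\
     (dsatP sx sd I phi -> ~ satC (dagger_x sx) cd Ic phi)).
  { induction phi as [| x | a IHa b IHb | a IHa | p ts]; simpl; intros Hw.
    - split; auto.
    - unfold dagger_x. split; intros H; rewrite H; auto.
    - destruct Hw as [Hwa Hwb]. destruct (IHa Hwa) as [Sa Da], (IHb Hwb) as [Sb Db]. split; [tauto|].
      intros [Hd|Hd] [Ha Hb]; [eapply Da|eapply Db]; eauto; fail.
    - destruct (IHa Hw) as [S D]. split; [exact D|]. intros H' H''. exact (H'' (S H')).
    - destruct Hw as [Hl Hw].
      split; intros [ds [Hds HI]];
      destruct (terms_ok Xs Fs arF sd cd Hsd' ts Hw ds Hds) as [Hm [Hf Hlen]];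
      rewrite Hm; rewrite Iagree in HI by congruence; inversion HI as [HI']; rewrite HI'; congruence. }
  split; [apply (proj1 (Hform psi Hpsi) Hsat)|].
  induction (V psi) as [|x l IH]; simpl; [exact Logic.I|].
  split; [|exact IH].
  unfold FA, FIff, FImp; simpl.
  assert (Hwx : wf_cv arF (cd x)).
  { unfold cd, dagger_d. destruct (sd x) eqn:E; [simpl; eauto|].
    destruct (sx x) as [[]|]; simpl; auto. }
  assert (Heq : Ic eqP [cd x; CNoflow] = true <-> cd x = CNoflow) by (apply Iceq; simpl; auto).
  assert (Hk : cd x = CNoflow <-> dagger_x sx x <> true).
  { unfold cd, dagger_d, dagger_x. destruct (sd x) eqn:E.
    - rewrite (Hmfa x) by congruence. split; congruence.
    - destruct (sx x) as [[]|]; split; congruence. }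
  split; intros [H1 H2]; apply H2.
  - apply Heq, Hk; exact H1.
  - apply Hk, Heq; exact H1.
Qed.
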